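(* Suppose $f \in \mathbb{C}[x_1,\dots,x_n]_d$ has a local border decomposition with $r$ summands based at $[\ell]$, where $\ell\in\mathbb{C}[x_1,\dots,x_n]_1$ is nonzero. If $d \ge r-1$, then $f = \ell^{d-r+1} g$ for some homogeneous polynomial $g$ of degree $r-1$.
   Context: Let $\mathbb{C}(\epsilon)[\boldsymbol{x}]_1$ be the set of linear forms in $x_1,\dots,x_n$ with coefficients rational functions of $\epsilon$. A nonzero $\ell(\epsilon)\in\mathbb{C}(\epsilon)[\boldsymbol{x}]_1$ can be expanded as a Laurent series $\ell(\epsilon)=\sum_{i\ge q}\epsilon^i \ell_i$ with $\ell_i\in\mathbb{C}[\boldsymbol{x}]_1$, $\ell_q\neq 0$; its projective limit is $\lim_{\epsilon\to0}[\ell(\epsilon)] := [\ell_q]$. A local border decomposition of $f$ with $r$ summands based at $[\ell]$ is an expression $f=\lim_{\epsilon\to0}\sum_{k=1}^r \ell_k^d$ (limit taken coefficientwise) with $\ell_k\in\mathbb{C}(\epsilon)[\boldsymbol{x}]_1$ and $\lim_{\epsilon\to0}[\ell_k(\epsilon)]=[\ell]$ for all $k$. *)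

(* Defs.v *)
From HB Require Import structures.
From mathcomp Require Import all_boot all_algebra.
From mathcomp Require Import fraction complex.
From mathcomp Require Import Rstruct.
From mathcomp Require Import mpoly.
Set Implicit Arguments. Unset Strict Implicit. Unset Printing Implicit Defensive.
Import GRing.Theory.
Local Open Scope ring_scope.

Definition CC : numClosedFieldType := (Rdefinitions.R)[i].

Definition Ceps : fieldType := {fraction {poly CC}}.

Definition eps : Ceps := @FracField.tofrac {poly CC} 'X.

Definition fr (p : {poly CC}) : Ceps := @FracField.tofrac {poly CC} p.

Definition linform (R : comNzRingType) (n : nat) (v : 'I_n -> R) : {mpoly R[n]} :=
  \sum_(i < n) v i *: 'X_i.

(* lim_{eps -> 0} r = c for r in C(eps): the Laurent expansion of r has
   only nonnegative powers of eps and constant term c; equivalently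
   r = a/b with a, b in C[eps], b(0) <> 0, and c = a(0)/b(0). *)
Definition lim0 (r : Ceps) (c : CC) : Prop :=
  exists a b : {poly CC},
    b.[0] != 0 /\ r = fr a / fr b /\ c = a.[0] / b.[0].

(* laurent_lead v q w : the linear form v (coefficient vector over C(eps))
   has Laurent expansion  v = sum_{i >= q} eps^i v_i  with v_q = w <> 0.
   Written out: v = eps^q * a / b with a a vector of polynomials in eps,
   b a polynomial with b(0) <> 0, and w = a(0)/b(0) nonzero. *)
Definition laurent_lead (n : nat) (v : 'I_n -> Ceps) (q : int) (w : 'I_n -> CC)
  : Prop :=
  (exists i, w i != 0) /\
  exists (a : 'I_n -> {poly CC}) (b : {poly CC}),
    [/\ b.[0] != 0,
        (forall i, v i = eps ^ q * (fr (a i) / fr b)) &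
        (forall i, w i = (a i).[0] / b.[0])].

(* lim_{eps->0} [v(eps)] = [l] in projective space: the lowest Laurent
   coefficient v_q is a nonzero scalar multiple of l. *)
Definition proj_lim (n : nat) (v : 'I_n -> Ceps) (l : 'I_n -> CC) : Prop :=
  exists (q : int) (w : 'I_n -> CC) (c : CC),
    [/\ laurent_lead v q w, c != 0 & forall i, w i = c * l i].

(* A local border decomposition of f with r summands based at [l]:
   f = lim_{eps->0} sum_{k<r} (L_k)^d coefficientwise, with each
   lim [L_k(eps)] = [l]. *)
Definition local_border_decomp (n d r : nat) (f : {mpoly CC[n]})
  (l : 'I_n -> CC) : Prop :=
  exists L : 'I_r -> 'I_n -> Ceps,
    (forall k, proj_lim (L k) l) /\
    (forall m : 'X_{1..n},
        lim0 ((\sum_(k < r) linform (L k) ^+ d)@_m) f@_m).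

(* Main.v *)
Require Import Defs.
From HB Require Import structures.
From mathcomp Require Import all_boot all_algebra.
From mathcomp Require Import fraction complex.
From mathcomp Require Import Rstruct.
From mathcomp Require Import mpoly.
From mathcomp Require Import ring.
Import GRing.Theory.
Local Open Scope ring_scope.

Set Implicit Arguments. Unset Strict Implicit. Unset Printing Implicit Defensive.


Lemma fr_neq0 (b : {poly CC}) : b.[0] != 0 -> fr b != 0.
Proof.
move=> hb; rewrite /fr tofrac_eq0; apply: contra hb => /eqP ->; by rewrite horner0.
Qed.

Lemma lim0_unique x c c' : lim0 x c -> lim0 x c' -> c = c'.
Proof.
move=> [a [b [hb [-> ->]]]] [a' [b' [hb' [e ->]]]].
have hb1 := fr_neq0 hb; have hb2 := fr_neq0 hb'.
have : fr (a * b') = fr (a' * b).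
  rewrite /fr !tofracM -/(fr a) -/(fr b) -/(fr a') -/(fr b').
  by apply/eqP; rewrite -eqr_div // e.
rewrite /fr => /eqP; rewrite tofrac_eq => /eqP /(congr1 (fun p => p.[0])).
rewrite !hornerM => h.
by apply/eqP; rewrite eqr_div // h.
Qed.

Definition cst (c : CC) : Ceps := fr c%:P.

Lemma lim0_cst c : lim0 (cst c) c.
Proof.
exists c%:P, 1; split; first by rewrite hornerC oner_neq0.
by rewrite /fr tofrac1 divr1 hornerC hornerE divr1.
Qed.

Lemma lim0_add x y c c' : lim0 x c -> lim0 y c' -> lim0 (x + y) (c + c').
Proof.
move=> [a [b [hb [-> ->]]]] [a' [b' [hb' [-> ->]]]].
have hb1 := fr_neq0 hb; have hb2 := fr_neq0 hb'.
exists (a * b' + a' * b), (b * b'); split; first by rewrite hornerM mulf_neq0.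
split; last by rewrite hornerD !hornerM addf_div.
by rewrite /fr tofracD !tofracM -/(fr a) -/(fr b) -/(fr a') -/(fr b') addf_div.
Qed.

Lemma lim0_mul x y c c' : lim0 x c -> lim0 y c' -> lim0 (x * y) (c * c').
Proof.
move=> [a [b [hb [-> ->]]]] [a' [b' [hb' [-> ->]]]].
exists (a * a'), (b * b'); split; first by rewrite hornerM mulf_neq0.
split; last by rewrite !hornerM mulf_div.
by rewrite /fr !tofracM -/(fr a) -/(fr b) -/(fr a') -/(fr b') mulf_div.
Qed.

Lemma lim0_opp x c : lim0 x c -> lim0 (- x) (- c).
Proof.
move=> h; have := lim0_mul (lim0_cst (-1)) h.
by rewrite /cst polyCN /fr tofracN tofrac1 !mulN1r.
Qed.

Lemma lim0_0 : lim0 0 0.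
Proof. by have := lim0_cst 0; rewrite /cst /fr polyC0 tofrac0. Qed.

Lemma lim0_sum (I : Type) (s : seq I) (P : pred I) (F : I -> Ceps) G :
  (forall i, P i -> lim0 (F i) (G i)) ->
  lim0 (\sum_(i <- s | P i) F i) (\sum_(i <- s | P i) G i).
Proof.
move=> h; elim: s => [|x s ih]; first by rewrite !big_nil; exact: lim0_0.
rewrite !big_cons; case: (P x) /idP => // Px; exact: lim0_add (h _ Px) ih.
Qed.

Lemma lim0_muln x c k : lim0 x c -> lim0 (x *+ k) (c *+ k).
Proof.
move=> h; elim: k => [|k ih]; first by rewrite !mulr0n; exact: lim0_0.
by rewrite !mulrS; apply: lim0_add.
Qed.

Lemma fr_sum (I : Type) (s : seq I) (P : pred I) (F : I -> {poly CC}) :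
  fr (\sum_(i <- s | P i) F i) = \sum_(i <- s | P i) fr (F i).
Proof. exact: rmorph_sum. Qed.

Lemma fr_mul p q : fr (p * q) = fr p * fr q.
Proof. exact: tofracM. Qed.


Section Dir.
Context (n : nat) (R : comNzRingType).
Implicit Types (p q : {mpoly R[n]}) (v : 'I_n -> R).

Definition Dv v p : {mpoly R[n]} := \sum_(i < n) v i *: p^`M(i).

Lemma DvD v p q : Dv v (p + q) = Dv v p + Dv v q.
Proof. by rewrite /Dv -big_split; apply: eq_bigr => i _; rewrite mderivD scalerDr. Qed.

Lemma DvZ v c p : Dv v (c *: p) = c *: Dv v p.
Proof. by rewrite /Dv scaler_sumr; apply: eq_bigr => i _; rewrite mderivZ !scalerA mulrC. Qed.

Lemma Dv0 v : Dv v 0 = 0.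
Proof. by rewrite /Dv big1 // => i _; rewrite mderiv0 scaler0. Qed.

Lemma Dv_sum v (I : Type) (s : seq I) (P : pred I) (F : I -> {mpoly R[n]}) :
  Dv v (\sum_(i <- s | P i) F i) = \sum_(i <- s | P i) Dv v (F i).
Proof.
elim: s => [|x s ih]; first by rewrite !big_nil Dv0.
by rewrite !big_cons; case: (P x); rewrite ?DvD ih.
Qed.

Lemma DvM v p q : Dv v (p * q) = Dv v p * q + p * Dv v q.
Proof.
rewrite /Dv mulr_suml mulr_sumr -big_split; apply: eq_bigr => i _.
by rewrite mderivM scalerDr -scalerAl -scalerAr.
Qed.

Lemma mderivXU (i j : 'I_n) : ('X_j : {mpoly R[n]})^`M(i) = ((j == i)%:R)%:MP.
Proof.
rewrite mderivX mnm1E; case: eqP => [->|_]; last by rewrite scale0r mpolyC0.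
by rewrite -{1}[U_(i)%MM]add0m addmK mpolyX0 scale1r mpolyC1.
Qed.

Lemma Dv_linform v (L : 'I_n -> R) :
  Dv v (linform L) = (\sum_(i < n) v i * L i)%:MP.
Proof.
rewrite /Dv /linform raddf_sum /=; apply: eq_bigr => i _.
rewrite (raddf_sum (mderiv i)) (bigD1 i) //= big1 => [|j /= nji].
  by rewrite addr0 mderivZ mderivXU eqxx scalerA -mul_mpolyC mulr1.
by rewrite mderivZ mderivXU (negbTE nji) mpolyC0 !scaler0.
Qed.

Lemma Dv_exp v p k : Dv v (p ^+ k.+1) = k.+1%:R *: (p ^+ k * Dv v p).
Proof.
elim: k => [|k ih]; first by rewrite expr1 expr0 mul1r mulr1n scale1r.
rewrite exprS DvM ih -scalerAr mulrA -exprS mulrC.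
by rewrite -[X in X + _]scale1r -scalerDl addrC -mulrSr.
Qed.

Definition iterDv (us : seq ('I_n -> R)) p := foldr (fun v q => Dv v q) p us.

Lemma iterDv_sum us (I : Type) (s : seq I) (P : pred I) (F : I -> {mpoly R[n]}) :
  iterDv us (\sum_(i <- s | P i) F i) = \sum_(i <- s | P i) iterDv us (F i).
Proof. by elim: us => //= u us ->; rewrite Dv_sum. Qed.

Definition lval (u L : 'I_n -> R) := \sum_(i < n) u i * L i.

Lemma iterDv_pow us (L : 'I_n -> R) d :
  exists c, iterDv us (linform L ^+ d) = c *: linform L ^+ (d - size us)
    /\ (has (fun u => lval u L == 0) us -> c = 0).
Proof.
elim: us => [|u us [c [ih hc]]] /=.
  by exists 1; rewrite scale1r subn0.
rewrite ih DvZ.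
case e: (d - size us)%N => [|k].
  exists 0; split; last by [].
  by rewrite expr0 /Dv big1 ?scaler0 ?scale0r // => i _; rewrite -mpolyC1 mderivC scaler0.
exists (c * k.+1%:R * lval u L); split.
  rewrite Dv_exp Dv_linform -/(lval u L) subnS e /=.
  by rewrite mulrC mul_mpolyC !scalerA.
by case/orP => [/eqP ->|/hc ->]; rewrite ?mulr0 ?mul0r.
Qed.
End Dir.


Definition conv n (F : {mpoly Ceps[n]}) (f : {mpoly CC[n]}) :=
  forall m, lim0 F@_m f@_m.
Definition vconv n (u : 'I_n -> Ceps) (v : 'I_n -> CC) := forall i, lim0 (u i) (v i).

Lemma conv_Dv n (F : {mpoly Ceps[n]}) (f : {mpoly CC[n]}) (u : 'I_n -> Ceps) v :
  conv F f -> vconv u v -> conv (Dv u F) (Dv v f).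
Proof.
move=> hF hu m; rewrite /Dv !raddf_sum /=.
apply: lim0_sum => i _; rewrite !mcoeffZ !mcoeff_mderiv.
by apply: lim0_mul => //; apply: lim0_muln.
Qed.

Lemma conv_iterDv n (I : Type) (U : I -> 'I_n -> Ceps) (V : I -> 'I_n -> CC) (F : {mpoly Ceps[n]}) (f : {mpoly CC[n]}) (s : seq I) :
  conv F f -> (forall x, vconv (U x) (V x)) ->
  conv (iterDv (map U s) F) (iterDv (map V s) f).
Proof.
move=> hF hUV; elim: s => //= x s ih; exact: conv_Dv.
Qed.

Lemma build_u n (Lk : 'I_n -> Ceps) (l : 'I_n -> CC) i0 (v : 'I_n -> CC) :
  l i0 != 0 -> proj_lim Lk l -> lval v l = 0 ->
  exists u, vconv u v /\ lval u Lk = 0.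
Proof.
move=> hl0 [q [w [c [[_ [a [b [hb hL hw]]]] hc hwl]]]] hvl.
have ha i : (a i).[0] = c * l i * b.[0] by rewrite -hwl hw mulfVK.
have ha0 : (a i0).[0] != 0 by rewrite ha !mulf_neq0.
pose A := \sum_(i < n) v i *: a i.
pose lam := fr A / fr (a i0).
exists (fun i => cst (v i) - (i == i0)%:R * lam); split.
  move=> i; suff h : lim0 (- ((i == i0)%:R * lam)) 0.
    by have := lim0_add (lim0_cst (v i)) h; rewrite addr0.
  rewrite -oppr0; apply: lim0_opp; rewrite -(mulr0 ((i == i0)%:R : CC)).
  have -> : ((i == i0)%:R : Ceps) = cst (i == i0)%:R by rewrite /cst /fr polyC_natr rmorph_nat.
  apply: lim0_mul; first exact: lim0_cst.
  exists A, (a i0); split=> //; split=> //.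
  rewrite horner_sum (eq_bigr (fun j => c * b.[0] * (v j * l j))).
    by rewrite -mulr_sumr -/(lval v l) hvl mulr0 mul0r.
  by move=> j _; rewrite hornerZ ha; ring.
rewrite /lval.
have e1 : \sum_(i < n) cst (v i) * Lk i = eps ^ q / fr b * fr A.
  rewrite /A fr_sum mulr_sumr; apply: eq_bigr => i _.
  rewrite hL /cst -mul_polyC fr_mul.
  rewrite [LHS]mulrCA -[RHS]mulrA; congr (_ * _).
  by rewrite [LHS]mulrA [LHS]mulrC.
have e2 : \sum_(i < n) (i == i0)%:R * lam * Lk i = lam * Lk i0.
  rewrite (bigD1 i0) //= big1 ?addr0 ?eqxx ?mul1r // => j /negbTE ->.
  by rewrite !mul0r.
under eq_bigr => i _ do rewrite mulrBl.
rewrite sumrB e1 e2 hL /lam.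
have hb1 := fr_neq0 hb; have ha1 := fr_neq0 ha0.
apply/eqP; rewrite subr_eq0; apply/eqP.
by rewrite [RHS]mulrCA (mulrA (fr A / fr (a i0))) divfK // -[LHS]mulrA [in LHS](mulrC (fr b)^-1).
Qed.

Lemma analytic n d r (f : {mpoly CC[n]}) (l : 'I_n -> CC) i0 :
  l i0 != 0 -> local_border_decomp d r f l ->
  forall V : 'I_r -> 'I_n -> CC, (forall k, lval (V k) l = 0) ->
  iterDv (map V (enum 'I_r)) f = 0.
Proof.
move=> hl0 [L [hL hF]] V hV.
have [U hU] := fin_all_exists (fun k => build_u hl0 (hL k) (hV k)).
have hc := @conv_iterDv n _ U V _ _ (enum 'I_r) hF (fun k => (hU k).1).
have h0 : iterDv (map U (enum 'I_r)) (\sum_(k < r) linform (L k) ^+ d) = 0.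
  rewrite iterDv_sum big1 // => k _.
  have [c [-> hc0]] := iterDv_pow (map U (enum 'I_r)) (L k) d.
  rewrite hc0 ?scale0r //; rewrite has_map; apply/hasP; exists k.
    by rewrite mem_enum.
  by rewrite /= (hU k).2.
apply/mpolyP => m; rewrite mcoeff0; apply: (lim0_unique (hc m)).
rewrite h0 mcoeff0; exact: lim0_0.
Qed.


Lemma exists_sub n (m : 'X_{1..n}) r : (r <= mdeg m)%N ->
  exists mu : 'X_{1..n}, (mu <= m)%MM /\ mdeg mu = r.
Proof.
elim: r => [|r ih] h.
  exists 0%MM; split; last exact: mdeg0.
  by apply/mnm_lepP => i; rewrite mnm0E.
have [mu [hle hd]] := ih (ltnW h).
case: (boolP [exists i, (mu i < m i)%N]) => [/existsP [i hi]|].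
  exists (mu + U_(i))%MM; split; last by rewrite mdegD mdeg1 hd addn1.
  apply/mnm_lepP => j; rewrite mnmDE mnm1E.
  case: eqP => [<-|_]; first by rewrite addn1.
  by rewrite addn0; move/mnm_lepP: hle.
rewrite negb_exists => /forallP hall.
have e : mu = m.
  apply/mnmP => i; apply/eqP; rewrite eqn_leq; move/mnm_lepP: hle => ->.
  by rewrite leqNgt hall.
by move: h; rewrite -e hd ltnn.
Qed.

Lemma lepUk n (m : 'X_{1..n}) i k : (k <= m i)%N -> (U_(i) *+ k <= m)%MM.
Proof.
move=> h; apply/mnm_lepP => j; rewrite mulmnE mnm1E.
by case: eqP => [<-|_]; rewrite ?mul1n ?mul0n.
Qed.

Lemma mdeg_split n (m : 'X_{1..n}) i k : (k <= m i)%N ->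
  mdeg (m - U_(i) *+ k) = (mdeg m - k)%N.
Proof.
move=> h; have hle := lepUk h.
by rewrite -{2}(submK hle) mdegD mdegMn mdeg1 mul1n addnK.
Qed.

Definition wv n (l : 'I_n -> CC) i0 : 'I_n -> CC := fun i => (i == i0)%:R / l i0.
Definition Tt n (l : 'I_n -> CC) i0 : n.-tuple {mpoly CC[n]} :=
  [tuple 'X_i + wv l i0 i *: ('X_i0 - linform l) | i < n].
Definition Rt n (l : 'I_n -> CC) i0 : n.-tuple {mpoly CC[n]} :=
  [tuple 'X_i + (i == i0)%:R *: (linform l - 'X_i0) | i < n].
Definition vj n (l : 'I_n -> CC) i0 (j : 'I_n) : 'I_n -> CC :=
  fun i => (j == i)%:R - wv l i0 i * l j.

Lemma compXU n k (lq : n.-tuple {mpoly CC[k]}) i : 'X_i \mPo lq = tnth lq i.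
Proof. by rewrite comp_mpolyXU -tnth_nth. Qed.

Lemma comp_linform n k (lq : n.-tuple {mpoly CC[k]}) (l : 'I_n -> CC) :
  linform l \mPo lq = \sum_(i < n) l i *: tnth lq i.
Proof.
rewrite /linform raddf_sum; apply: eq_bigr => i _.
by rewrite /= comp_mpolyZ compXU.
Qed.

Lemma sum_delta n (i0 : 'I_n) (F : 'I_n -> {mpoly CC[n]}) :
  \sum_(i < n) (i == i0)%:R *: F i = F i0.
Proof.
rewrite (bigD1 i0) //= big1 ?addr0 ?eqxx ?scale1r // => j /negbTE ->.
by rewrite scale0r.
Qed.

Lemma rhoT n (l : 'I_n -> CC) i0 i : l i0 != 0 ->
  tnth (Tt l i0) i \mPo Rt l i0 = 'X_i.
Proof.
move=> hl; rewrite tnth_mktuple comp_mpolyD comp_mpolyZ comp_mpolyB !compXU.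
rewrite comp_linform !tnth_mktuple eqxx scale1r (addrCA 'X_i0) subrr addr0.
under eq_bigr => j _ do rewrite tnth_mktuple scalerDr scalerA mulrC -scalerA.
rewrite big_split /= sum_delta -/(linform l).
set D := linform l - 'X_i0.
rewrite opprD (addrA (linform l)) subrr add0r scalerN scalerA /wv.
by rewrite divfK // addrK.

Qed.

Lemma rho_tau n (l : 'I_n -> CC) i0 p : l i0 != 0 ->
  (p \mPo Tt l i0) \mPo Rt l i0 = p.
Proof.
move=> hl; rewrite [p \mPo _]comp_mpolyEX (raddf_sum (comp_mpoly (Rt l i0))) [RHS]mpolyE.
apply: eq_bigr => m _; rewrite /= comp_mpolyZ comp_mpolyX rmorph_prod.
rewrite [in RHS]mpolyXE_id; congr (_ *: _); apply: eq_bigr => i _.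
by rewrite rmorphXn /= rhoT.
Qed.

Lemma prod_homog n k (lq : n.-tuple {mpoly CC[k]}) (m : 'X_{1..n}) (s : seq 'I_n) :
  (forall i, tnth lq i \is 1.-homog) ->
  \prod_(i <- s) tnth lq i ^+ m i \is (\sum_(i <- s) m i)%N.-homog.
Proof.
move=> h; elim: s => [|i s ih]; first by rewrite !big_nil dhomog1.
rewrite !big_cons; apply: dhomogM => //.
by have := dhomogMn (m i) (h i); rewrite mul1n.
Qed.

Lemma comp_homog n k (lq : n.-tuple {mpoly CC[k]}) p d :
  (forall i, tnth lq i \is 1.-homog) -> p \is d.-homog -> p \mPo lq \is d.-homog.
Proof.
move=> h hp; rewrite comp_mpolyE big_seq; apply: rpred_sum => m hm.
apply: rpredZ.
have := @prod_homog n k lq m (index_enum _) h.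
by rewrite -mdegE (dhomog_mf hp hm).
Qed.

Lemma X_homog n (i : 'I_n) : ('X_i : {mpoly CC[n]}) \is 1.-homog.
Proof. by rewrite dhomogX; apply/eqP; exact: mdeg1. Qed.

Lemma linform_homog n (l : 'I_n -> CC) : linform l \is 1.-homog.
Proof. by apply: rpred_sum => i _; apply: rpredZ; exact: X_homog. Qed.

Lemma Tt_homog n (l : 'I_n -> CC) i0 i : tnth (Tt l i0) i \is 1.-homog.
Proof.
rewrite tnth_mktuple; apply: rpredD; first exact: X_homog.
by apply: rpredZ; apply: rpredB; [exact: X_homog | exact: linform_homog].
Qed.

Lemma Rt_homog n (l : 'I_n -> CC) i0 i : tnth (Rt l i0) i \is 1.-homog.
Proof.
rewrite tnth_mktuple; apply: rpredD; first exact: X_homog.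
by apply: rpredZ; apply: rpredB; [exact: linform_homog | exact: X_homog].
Qed.

Lemma sum_deltaC n (i0 : 'I_n) (F : 'I_n -> CC) :
  \sum_(i < n) F i *: (((i == i0)%:R)%:MP : {mpoly CC[n]}) = (F i0)%:MP.
Proof.
rewrite (bigD1 i0) //= big1 ?addr0 ?eqxx => [|j /negbTE ->].
  by rewrite -mul_mpolyC -mpolyCM mulr1.
by rewrite mpolyC0 scaler0.
Qed.

Lemma Dv_XU n (v : 'I_n -> CC) i : Dv v ('X_i : {mpoly CC[n]}) = (v i)%:MP.
Proof.
rewrite /Dv (eq_bigr (fun k => v k *: (((k == i)%:R)%:MP : {mpoly CC[n]}))).
  exact: sum_deltaC.
by move=> k _; rewrite mderivXU eq_sym.
Qed.

Lemma mderiv_linform n (l : 'I_n -> CC) j :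
  (linform l)^`M(j) = (l j)%:MP.
Proof.
rewrite /linform (raddf_sum (mderiv j)).
rewrite (eq_bigr (fun k => l k *: (((k == j)%:R)%:MP : {mpoly CC[n]}))).
  exact: sum_deltaC.
by move=> k _; rewrite /= mderivZ mderivXU.
Qed.


Lemma compM n k (lq : n.-tuple {mpoly CC[k]}) (p q : {mpoly CC[n]}) :
  (p * q) \mPo lq = (p \mPo lq) * (q \mPo lq).
Proof. exact: rmorphM. Qed.

Section Chain.
Variables (n : nat) (l : 'I_n -> CC) (i0 j : 'I_n).
Local Notation tau p := (p \mPo Tt l i0).
Local Notation A p := ((tau p)^`M(j)).
Local Notation B p := (tau (Dv (vj l i0 j) p)).

Lemma chain_mul p q : A p = B p -> A q = B q -> A (p * q) = B (p * q).
Proof.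
move=> hp hq.
rewrite compM.
rewrite mderivM.
rewrite DvM.
rewrite comp_mpolyD.
rewrite !compM.
apply: f_equal2; apply: f_equal2.
- exact: hp.
- exact: erefl.
- exact: erefl.
- exact: hq.
Qed.

Lemma chain_one : A 1 = B 1.
Proof.
rewrite comp_mpoly1 -mpolyC1 mderivC /Dv big1 ?comp_mpoly0 // => i _.
by rewrite mderivC scaler0.
Qed.

Lemma chain_XU i : j != i0 -> A 'X_i = B 'X_i.
Proof.
move=> hj; rewrite compXU Dv_XU comp_mpolyC tnth_mktuple /vj.
rewrite mderivD mderivZ mderivB !mderivXU mderiv_linform (eq_sym i0 j) (negbTE hj).
rewrite mpolyC0 sub0r scalerN -mul_mpolyC -mpolyCM (eq_sym i j).
by rewrite -mpolyCN -mpolyCD.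
Qed.

Lemma chain_pow i k : j != i0 -> A ('X_i ^+ k) = B ('X_i ^+ k).
Proof.
move=> hj; elim: k => [|k ih]; first by rewrite expr0; exact: chain_one.
rewrite exprS; exact: (chain_mul (chain_XU i hj) ih).
Qed.

Lemma chain_prod (m : 'X_{1..n}) (s : seq 'I_n) : j != i0 ->
  A (\prod_(i <- s) 'X_i ^+ m i) = B (\prod_(i <- s) 'X_i ^+ m i).
Proof.
move=> hj; elim: s => [|i s ih]; first by rewrite big_nil; exact: chain_one.
rewrite big_cons; exact: (chain_mul (chain_pow i (m i) hj) ih).
Qed.

Lemma chain p : j != i0 -> A p = B p.
Proof.
move=> hj; elim/mpolyind: p => [|c m p _ _ ih].
  rewrite comp_mpoly0 mderiv0 Dv0 comp_mpoly0; exact: erefl.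
rewrite comp_mpolyD mderivD DvD comp_mpolyD.
rewrite comp_mpolyZ mderivZ DvZ comp_mpolyZ.
apply: f_equal2; last exact: ih.
apply: f_equal; rewrite mpolyXE_id; exact: chain_prod.
Qed.
End Chain.


Lemma size_flat n (mu : 'X_{1..n}) (t : seq 'I_n) :
  size (flatten [seq nseq (mu i) i | i <- t]) = (\sum_(i <- t) mu i)%N.
Proof. by elim: t => [|i t ih]; rewrite ?big_nil ?big_cons //= size_cat size_nseq ih. Qed.

Lemma all_flat n (mu : 'X_{1..n}) (t : seq 'I_n) i0 : mu i0 = 0%N ->
  all (fun j => j != i0) (flatten [seq nseq (mu i) i | i <- t]).
Proof.
move=> h0; elim: t => [|i t ih] //=; rewrite all_cat ih andbT all_nseq.
by case: (eqVneq i i0) => [->|hi]; rewrite ?h0 ?hi ?orbT.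
Qed.

Lemma sum_enum n (F : 'I_n -> nat) : (\sum_(i <- enum 'I_n) F i)%N = (\sum_(i < n) F i)%N.
Proof. by rewrite big_enum. Qed.

Lemma vanish n (h : {mpoly CC[n]}) i0 r :
  (forall js : seq 'I_n, size js = r -> all (fun j => j != i0) js ->
     foldr (@mderiv n CC) h js = 0) ->
  forall m : 'X_{1..n}, (r <= mdeg m - m i0)%N -> h@_m = 0.
Proof.
move=> H m hm.
pose m' := (m - U_(i0) *+ (m i0))%MM.
have hm' : mdeg m' = (mdeg m - m i0)%N := mdeg_split (leqnn _).
have [mu [hle hd]] : exists mu : 'X_{1..n}, (mu <= m')%MM /\ mdeg mu = r.
  by apply: exists_sub; rewrite hm'.
have hmu0 : mu i0 = 0%N.
  move/mnm_lepP: hle => /(_ i0); rewrite mnmBE mulmnE mnm1E eqxx mul1n subnn leqn0.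
  by move/eqP.
have hle2 : (mu <= m)%MM := lepm_trans hle (lem_subr _ _).
have hz : h^`M[mu] = 0.
  rewrite mderivm_foldr /=; apply: H; last exact: all_flat.
  by rewrite size_flat sum_enum -mdegE.
have := mcoeff_mderivm mu h (m - mu); rewrite hz mcoeff0 addmC submK //.
move/esym/eqP; rewrite Num.Theory.mulrn_eq0 => /orP [/eqP hN|/eqP //]; exfalso.
have hpos : (0 < \prod_(i < n) (m i) ^_ (mu i))%N.
  by rewrite prodn_gt0 // => i; rewrite ffact_gt0; move/mnm_lepP: hle2.
by rewrite hN in hpos.
Qed.

Lemma recon n (h : {mpoly CC[n]}) i0 k e : h \is (e + k)%N.-homog ->
  (forall m, h@_m != 0 -> (k <= m i0)%N) ->
  exists g : {mpoly CC[n]}, g \is e.-homog /\ h = 'X_i0 ^+ k * g.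
Proof.
move=> hh hk.
exists (\sum_(m <- msupp h) h@_m *: 'X_[m - U_(i0) *+ k]); split.
  rewrite big_seq; apply: rpred_sum => m hm; apply: rpredZ.
  rewrite dhomogX; apply/eqP.
  have hk' : (k <= m i0)%N by apply: hk; rewrite -mcoeff_msupp.
  have e1 : mdeg m = (e + k)%N := dhomog_mf hh hm.
  have e2 := mdeg_split hk'; rewrite e1 addnK in e2; exact: e2.
rewrite mulr_sumr [LHS]mpolyE; apply: eq_big_seq => m hm.
have hk' : (k <= m i0)%N by apply: hk; rewrite -mcoeff_msupp.
by rewrite -scalerAr mpolyXn -mpolyXD addmC submK //; exact: lepUk.
Qed.

Lemma iter_chain n (l : 'I_n -> CC) i0 (p : {mpoly CC[n]}) (js : seq 'I_n) :
  all (fun j => j != i0) js ->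
  foldr (@mderiv n CC) (p \mPo Tt l i0) js = iterDv (map (vj l i0) js) p \mPo Tt l i0.
Proof.
elim: js => [|j js ih] //= /andP [hj ha].
rewrite ih //; exact: chain.
Qed.

Lemma vj_ker n (l : 'I_n -> CC) i0 j : l i0 != 0 -> lval (vj l i0 j) l = 0.
Proof.
move=> hl; rewrite /lval /vj.
under eq_bigr => i _ do rewrite mulrBl.
rewrite sumrB (bigD1 j) //= eqxx mul1r big1 ?addr0 => [|i /negbTE]; last first.
  by rewrite eq_sym => ->; rewrite mul0r.
rewrite (bigD1 i0) //= big1 ?addr0 => [|i /negbTE hi]; last first.
  by rewrite /wv hi mul0r !mul0r.
by rewrite /wv eqxx mul1r mulrAC mulVf // mul1r subrr.
Qed.

Lemma analytic_seq n d r (f : {mpoly CC[n]}) (l : 'I_n -> CC) i0 :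
  l i0 != 0 -> local_border_decomp d r f l ->
  forall s : seq ('I_n -> CC), size s = r -> all (fun v => lval v l == 0) s ->
  iterDv s f = 0.
Proof.
move=> hl hdec s hs ha.
pose V (k : 'I_r) := nth (fun _ => 0) s k.
have e : map V (enum 'I_r) = s.
  rewrite /V -[s in RHS](mkseq_nth (fun _ => 0)) /mkseq -val_enum_ord -map_comp hs.
  by [].
rewrite -e; apply: (analytic hl hdec) => k.
apply/eqP; move/all_nthP: ha; apply; rewrite hs; exact: ltn_ord.
Qed.

Unset Implicit Arguments.


Theorem lemma7 (n d r : nat) (f : {mpoly CC[n]}) (l : 'I_n -> CC) :
  f \is d.-homog ->
  (exists i, l i != 0) ->
  local_border_decomp d r f l ->
  (r.-1 <= d)%N ->
  exists g : {mpoly CC[n]},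
    g \is r.-1.-homog /\ f = linform l ^+ (d.+1 - r) * g.
Proof.
move=> hf [i0 hl0] hdec hrd.
case: (posnP r) => [r0|hr0].
  subst r; have hf0 := analytic_seq hl0 hdec (s := [::]) erefl erefl.
  simpl in hf0; exists 0; split; first exact: dhomog0.
  by rewrite mulr0.
pose h := f \mPo Tt l i0.
have hh : h \is d.-homog := comp_homog (Tt_homog l i0) hf.
have H : forall js : seq 'I_n, size js = r -> all (fun j => j != i0) js ->
    foldr (@mderiv n CC) h js = 0.
  move=> js hs ha; rewrite /h iter_chain //.
  rewrite (analytic_seq hl0 hdec (s := map (vj l i0) js)) ?size_map ?comp_mpoly0 //.
  by rewrite all_map; apply/allP => j _ /=; rewrite vj_ker.
have hk : forall m, h@_m != 0 -> (d.+1 - r <= m i0)%N.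
  move=> m hm; rewrite leqNgt; apply/negP => hlt.
  have hmd : mdeg m = d by apply: (dhomog_mf hh); rewrite mcoeff_msupp.
  move: hm; rewrite (vanish H) ?eqxx //.
  rewrite hmd; move: hlt hrd; clear; case: r => [|r'] /=; first by rewrite subn0.
  rewrite subSS => h1 h2.
  by rewrite ltn_subRL addnC -ltn_subRL.
have hh' : h \is (r.-1 + (d.+1 - r))%N.-homog.
  suff -> : (r.-1 + (d.+1 - r))%N = d by [].
  by move: hrd hr0; clear; case: r => [|r'] //= h1 _; rewrite subSS subnKC.
have [g' [hg' he]] := recon hh' hk.
exists (g' \mPo Rt l i0); split; first exact: comp_homog (Rt_homog l i0) hg'.
rewrite -{1}(rho_tau f hl0) -/h he compM rmorphXn /= compXU tnth_mktuple eqxx scale1r.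
by rewrite addrC subrK.
Qed.
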